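(* Let $V=\bigoplus_{n\in\mathbb{Z}}V_n$ be a vertex operator algebra and $M$ a subspace of $V$. (1) Suppose $V=\bigoplus_{n=n_0}^{\infty}V_n$ with $n_0<0$ and $V_{n_0}\neq 0$. Then every $v\in\bigoplus_{n=n_0}^{-1}V_n$ lies in $sr_{0,-1}(M)$; in particular $sr_{0,-1}(M)\neq\{0\}$. (2) Suppose $V$ satisfies the $C_2$-cofiniteness condition and $M\supseteq C_2(V)$. If $u\in\bigoplus_{i=1}^{k}V_i$ for some positive integer $k$, then $u\in sr_{0,-1}(M)$.
   Context: A vertex operator algebra is a $\mathbb{Z}$-graded vertex algebra $V=\bigoplus_{n\in\mathbb{Z}}V_n$ over $\mathbb{C}$ (with $Y(u,z)=\sum_n u_nz^{-n-1}$, $\mathbf{1}\in V_0$, and $u_mV_n\subseteq V_{k+n-m-1}$ for $u\in V_k$), with $\dim V_n<\infty$, $V_n=0$ for $n$ sufficiently negative, and a conformal vector $\omega\in V_2$ whose modes $L(n)$ ($Y(\omega,z)=\sum L(n)z^{-n-2}$) satisfy the Virasoro relations, $L(0)$ acts on $V_n$ as $n$, and $Y(L(-1)v,z)=\frac{d}{dz}Y(v,z)$. $C_2(V)=\operatorname{span}_{\mathbb{C}}\{u_{-2}v:u,v\in V\}$; $V$ satisfies the $C_2$-cofiniteness condition if $\dim V/C_2(V)<\infty$. Iterated products are nested to the right: $v_{n_1}\cdots v_{n_t}v=v_{n_1}(\cdots(v_{n_t}v))$. For a subspace $M\subseteq V$: $lsr_{0,-1}(M)$ is the set of $v\in V$ such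 that for every $b\in V$ there is $m\ge0$ with $b_sv_{n_1}\cdots v_{n_t}v\in M$ for all $t\ge m$ and all $s,n_1,\dots,n_t\in\{0,-1\}$. $rsr_{0,-1}(M)$ is the set of $v\in V$ such that for every $w\in V$ there is $m\ge 0$ with $(v_{n_1}\cdots v_{n_t}v)_nw\in M$ for all $t\ge m$ and all $n,n_1,\dots,n_t\in\{0,-1\}$. $sr_{0,-1}(M)=lsr_{0,-1}(M)\cap rsr_{0,-1}(M)$. *)

(* Defs.v *)
From HB Require Import structures.
From mathcomp Require Import all_boot all_order all_algebra.
From mathcomp Require Import reals complex.
Set Implicit Arguments. Unset Strict Implicit. Unset Printing Implicit Defensive.
Import Order.TTheory GRing.Theory Num.Theory.
Local Open Scope ring_scope.

Section VOADefs.
Variables (C : fieldType) (V : lmodType C).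

Definition is_subspace (M : V -> Prop) : Prop :=
  M 0 /\ forall (a : C) (x y : V), M x -> M y -> M (a *: x + y).

Definition binz (r : int) (i : nat) : C :=
  (\prod_(j < i) (r%:~R - (j : nat)%:R)) / (i`!)%:R.

(* Vn : int -> V -> Prop is the grading (Vn n = V_n);
   Y u n v = u_n v is the n-th mode (Y(u,z) = sum_n u_n z^{-n-1});
   vac = vacuum vector 1, om = conformal vector omega, c = central charge. *)
Variables (Vn : int -> V -> Prop) (Y : V -> int -> V -> V) (vac om : V) (c : C).

Definition Lop (n : int) (v : V) : V := Y om (n + 1) v.

Definition in_graded_sum (P : int -> bool) (v : V) : Prop :=
  exists s : seq (int * V),
    (forall p, p \in s -> P p.1 /\ Vn p.1 p.2) /\ v = \sum_(p <- s) p.2.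

Record VOA_axioms : Prop := {
  grade_subspace : forall n, is_subspace (Vn n);
  grade_span : forall v : V, in_graded_sum (fun _ => true) v;
  grade_direct : forall s : seq (int * V), uniq (map fst s) ->
      (forall p, p \in s -> Vn p.1 p.2) -> \sum_(p <- s) p.2 = 0 ->
      forall p, p \in s -> p.2 = 0;
  grade_findim : forall n, exists b : seq V, (forall x, x \in b -> Vn n x) /\
      forall x, Vn n x -> exists a : 'I_(size b) -> C,
        x = \sum_(i < size b) a i *: b`_i;
  grade_bounded_below : exists N : int, forall n, n < N -> forall x, Vn n x -> x = 0;
  Y_linear_l : forall n (a : C) u1 u2 v,
      Y (a *: u1 + u2) n v = a *: Y u1 n v + Y u2 n v;
  Y_linear_r : forall u n (a : C) v1 v2,
      Y u n (a *: v1 + v2) = a *: Y u n v1 + Y u n v2;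
  Y_truncation : forall u v, exists N : int, forall n, N <= n -> Y u n v = 0;
  vac_mode : forall n v, Y vac n v = (if n == -1 then v else 0);
  create_vac : forall u, Y u (-1) vac = u /\ forall n, 0 <= n -> Y u n vac = 0;
  (* Borcherds (Jacobi) identity; the sums over i >= 0 are finite by truncation *)
  borcherds : forall u v w (p q r : int), exists N0 : nat, forall N : nat, (N0 <= N)%N ->
      \sum_(i < N) binz p i *: Y (Y u (r + (i : nat)%:Z) v) (p + q - (i : nat)%:Z) w
    = \sum_(i < N) ((-1) ^+ i * binz r i) *:
          (Y u (p + r - (i : nat)%:Z) (Y v (q + (i : nat)%:Z) w)
           - (-1) ^ r *: Y v (q + r - (i : nat)%:Z) (Y u (p + (i : nat)%:Z) w));
  vac_deg : Vn 0 vac;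
  mode_deg : forall (k n m : int) u v, Vn k u -> Vn n v -> Vn (k + n - m - 1) (Y u m v);
  om_deg : Vn 2 om;
  virasoro : forall (m n : int) w,
      Lop m (Lop n w) - Lop n (Lop m w)
    = (m - n)%:~R *: Lop (m + n) w
      + (if m + n == 0 then ((m ^+ 3 - m)%:~R / 12%:R) * c else 0) *: w;
  L0_grading : forall n v, Vn n v -> Lop 0 v = n%:~R *: v;
  L_minus1_derivative : forall v n w, Y (Lop (-1) v) n w = - n%:~R *: Y v (n - 1) w
}.

Definition C2 (x : V) : Prop :=
  exists s : seq (C * V * V), x = \sum_(p <- s) p.1.1 *: Y p.1.2 (-2) p.2.

Definition C2_cofinite : Prop :=
  exists b : seq V, forall x, exists a : 'I_(size b) -> C,
    C2 (x - \sum_(i < size b) a i *: b`_i).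

(* v_{n_1} ... v_{n_t} v, nested to the right, for ns = [:: n_1; ...; n_t] *)
Definition iter_prod (v : V) (ns : seq int) : V := foldr (fun n x => Y v n x) v ns.

Definition in01 (n : int) : bool := (n == 0) || (n == -1).

Definition lsr01 (M : V -> Prop) (v : V) : Prop :=
  forall b : V, exists m : nat, forall (s : int) (ns : seq int),
    (m <= size ns)%N -> in01 s -> all in01 ns -> M (Y b s (iter_prod v ns)).

Definition rsr01 (M : V -> Prop) (v : V) : Prop :=
  forall w : V, exists m : nat, forall (n : int) (ns : seq int),
    (m <= size ns)%N -> in01 n -> all in01 ns -> M (Y (iter_prod v ns) n w).

Definition sr01 (M : V -> Prop) (v : V) : Prop := lsr01 M v /\ rsr01 M v.

End VOADefs.

(* Main.v *)
Require Import Defs.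
From HB Require Import structures.
From mathcomp Require Import all_boot all_order all_algebra.
From mathcomp Require Import reals complex.
From mathcomp Require Import zify.
Import Order.TTheory GRing.Theory Num.Theory.
Local Open Scope ring_scope.
Set Implicit Arguments. Unset Strict Implicit.

Section Work.
Variables (R : realType) (V : lmodType R[i])
    (Vn : int -> V -> Prop) (Y : V -> int -> V -> V) (vac om : V) (c : R[i]).
Hypothesis HV : VOA_axioms Vn Y vac om c.

Lemma Y0l m y : Y 0 m y = 0.
Proof.
have := Y_linear_l HV m 1 0 0 y; rewrite !scale1r addr0 => /(congr1 (fun z => z - Y 0 m y)).
by rewrite subrr addrK => <-.
Qed.
Lemma Y0r x m : Y x m 0 = 0.
Proof.
have := Y_linear_r HV x m 1 0 0; rewrite !scale1r addr0 => /(congr1 (fun z => z - Y x m 0)).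
by rewrite subrr addrK => <-.
Qed.
Lemma YDl m x z y : Y (x + z) m y = Y x m y + Y z m y.
Proof. by have := Y_linear_l HV m 1 x z y; rewrite !scale1r. Qed.
Lemma YDr x m y z : Y x m (y + z) = Y x m y + Y x m z.
Proof. by have := Y_linear_r HV x m 1 y z; rewrite !scale1r. Qed.
Lemma YZl m a x y : Y (a *: x) m y = a *: Y x m y.
Proof. by have := Y_linear_l HV m a x 0 y; rewrite !addr0 Y0l addr0. Qed.
Lemma YZr x m a y : Y x m (a *: y) = a *: Y x m y.
Proof. by have := Y_linear_r HV x m a y 0; rewrite !addr0 Y0r addr0. Qed.
Lemma Ysuml m y (I : Type) (r : seq I) (P : pred I) (F : I -> V) :
  Y (\sum_(i <- r | P i) F i) m y = \sum_(i <- r | P i) Y (F i) m y.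
Proof. exact: (big_morph (fun x => Y x m y) (fun x z => YDl m x z y) (Y0l m y)). Qed.
Lemma Ysumr x m (I : Type) (r : seq I) (P : pred I) (F : I -> V) :
  Y x m (\sum_(i <- r | P i) F i) = \sum_(i <- r | P i) Y x m (F i).
Proof. exact: (big_morph (fun y => Y x m y) (YDr x m) (Y0r x m)). Qed.

Definition C2' := C2 Y.

Lemma C2_0 : C2' 0.
Proof. by exists [::]; rewrite big_nil. Qed.
Lemma C2_D x y : C2' x -> C2' y -> C2' (x + y).
Proof. by move=> [s1 ->] [s2 ->]; exists (s1 ++ s2); rewrite big_cat. Qed.
Lemma C2_Z a x : C2' x -> C2' (a *: x).
Proof.
move=> [s ->]; exists [seq (a * p.1.1, p.1.2, p.2) | p <- s].
rewrite big_map scaler_sumr; apply: eq_bigr => p _ /=; by rewrite scalerA.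
Qed.
Lemma C2_N x : C2' x -> C2' (- x).
Proof. by move=> h; rewrite -scaleN1r; apply: C2_Z. Qed.
Lemma C2_B x y : C2' x -> C2' y -> C2' (x - y).
Proof. by move=> h1 h2; apply: C2_D => //; apply: C2_N. Qed.
Lemma C2_sum (I : Type) (r : seq I) (P : pred I) (F : I -> V) :
  (forall i, P i -> C2' (F i)) -> C2' (\sum_(i <- r | P i) F i).
Proof. by move=> h; apply: (big_ind C2') => //; [exact: C2_0 | exact: C2_D]. Qed.
Lemma C2_m2 a b : C2' (Y a (-2) b).
Proof. by exists [:: (1, a, b)]; rewrite big_seq1 scale1r. Qed.

Lemma natr_neq0 (j : nat) : ((j.+1)%:R : R[i]) != 0.
Proof. by rewrite pnatr_eq0. Qed.

Lemma F0 (j : nat) a b : C2' (Y a (-2 - j%:Z) b).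
Proof.
elim: j a b => [|j IH] a b; first by rewrite subr0; apply: C2_m2.
have h := L_minus1_derivative HV a (-2 - j%:Z) b.
have -> : -2 - (j.+1)%:Z = -2 - j%:Z - 1 by lia.
have e : - (-2 - j%:Z)%:~R = ((j.+2)%:R : R[i]).
  by rewrite -mulrNz; have -> : - (-2 - j%:Z) = (j.+2)%:Z by lia.
rewrite e in h.
have -> : Y a (-2 - j%:Z - 1) b = ((j.+2)%:R : R[i])^-1 *: Y (Lop Y om (-1) a) (-2 - j%:Z) b.
  by rewrite h scalerA mulVf ?scale1r // natr_neq0.
by apply: C2_Z; apply: IH.
Qed.

Lemma F0' (m : int) a b : m <= -2 -> C2' (Y a m b).
Proof.
move=> hm; have -> : m = -2 - (absz (-2 - m)%R)%:Z by lia.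
exact: F0.
Qed.


Lemma binz0 (r : int) : binz R[i] r 0 = 1.
Proof. by rewrite /binz big_ord0 fact0 divr1. Qed.
Lemma binz0S (i : nat) : binz R[i] 0 i.+1 = 0.
Proof. by rewrite /binz big_ord_recl /= subrr mul0r mul0r. Qed.

Lemma COMM a x y (p q : int) : exists N : nat,
  Y a p (Y x q y) - Y x q (Y a p y) =
  \sum_(i < N) binz R[i] p i *: Y (Y a i%:Z x) (p + q - i%:Z) y.
Proof.
have [N0 HN] := borcherds HV a x y p q 0.
exists N0.+1; have h := HN N0.+1 (leqnSn _); symmetry in h.
rewrite big_ord_recl big1 in h; last first.
  by move=> i _; rewrite /= binz0S mulr0 scale0r.
move: h.
rewrite /= expr0 mul1r binz0 scale1r expr0z scale1r addr0.
have -> : p + 0 - 0%N%:Z = p by lia.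
have -> : q + 0 - 0%N%:Z = q by lia.
have -> : p + 0%N%:Z = p by lia.
have -> : q + 0%N%:Z = q by lia.
move=> ->; apply: eq_bigr => i _; by rewrite add0r.
Qed.

Lemma C2_closedL a (n : int) x : n <= 0 -> C2' x -> C2' (Y a n x).
Proof.
move=> hn [s ->]; rewrite Ysumr; apply: C2_sum => p _; rewrite YZr; apply: C2_Z.
have [N HN] := COMM a p.1.2 p.2 n (-2).
rewrite -(subrK (Y p.1.2 (-2) (Y a n p.2)) (Y a n _)) HN.
apply: C2_D; last exact: C2_m2.
apply: C2_sum => i _; apply: C2_Z; apply: F0'; lia.
Qed.

Lemma C2_closedR (n : int) x w : n <= 0 -> C2' x -> C2' (Y x n w).
Proof.
move=> hn [s ->]; rewrite Ysuml; apply: C2_sum => p _; rewrite YZl; apply: C2_Z.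
have [N0 HN] := borcherds HV p.1.2 p.2 w 0 n (-2).
have h := HN N0.+1 (leqnSn _).
rewrite big_ord_recl big1 in h; last first.
  by move=> i _; rewrite /= binz0S scale0r.
move: h; rewrite /= binz0 scale1r addr0.
have -> : -2 + 0%N%:Z = -2 by lia.
have -> : 0 + n - 0%N%:Z = n by lia.
move=> ->; apply: C2_sum => i _; apply: C2_Z; apply: C2_B; last apply: C2_Z;
  apply: F0'; lia.
Qed.

Lemma F3 u v : C2' (Y u 0 v + Y v 0 u).
Proof.
have [N0 HN] := borcherds HV u v vac (-1) 0 0.
have h := HN N0.+1 (leqnSn _).
rewrite big_ord_recl in h.
symmetry in h; rewrite big_ord_recl big1 in h; last first.
  by move=> i _; rewrite /= binz0S mulr0 scale0r.
move: h; rewrite /= expr0 mul1r binz0 scale1r expr0z scale1r addr0.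
have -> : -1 + 0 - 0%N%:Z = -1 by lia.
have -> : (0 : int) + 0%N%:Z = 0 by lia.
rewrite binz0 scale1r.
rewrite (create_vac HV u).1 ((create_vac HV v).2 0) // Y0r sub0r.
rewrite (create_vac HV _).1.
set S := \sum_(i < N0) _ => h.
have -> : Y u 0 v + Y v 0 u = - S.
  by rewrite -[Y v 0 u]opprK h opprD addrA subrr add0r.
apply: C2_N; apply: C2_sum => i _; apply: C2_Z; apply: F0'; rewrite /bump /=; lia.
Qed.

Lemma F3' u : C2' (Y u 0 u).
Proof.
have -> : Y u 0 u = (2%:R : R[i])^-1 *: (Y u 0 u + Y u 0 u).
  have -> : Y u 0 u + Y u 0 u = (2%:R : R[i]) *: Y u 0 u by rewrite scaler_nat mulr2n.
  by rewrite scalerA mulVf ?scale1r // natr_neq0.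
by apply: C2_Z; apply: F3.
Qed.


Definition GS (P : int -> Prop) (Q : V -> Prop) (x : V) : Prop :=
  exists s : seq (int * V),
    (forall p, p \in s -> [/\ P p.1, Vn p.1 p.2 & Q p.2]) /\ x = \sum_(p <- s) p.2.

Lemma GS_of (P : pred int) x : in_graded_sum Vn P x -> GS P (fun _ => True) x.
Proof. by move=> [s [hs ->]]; exists s; split => // p /hs []. Qed.

Lemma GS_mono (P P' : int -> Prop) (Q Q' : V -> Prop) x :
  (forall n, P n -> P' n) -> (forall y, Q y -> Q' y) -> GS P Q x -> GS P' Q' x.
Proof.
move=> hP hQ [s [hs ->]]; exists s; split => // p /hs [h1 h2 h3]; split; auto.
Qed.

Lemma GS_0 P Q : GS P Q 0.
Proof. by exists [::]; rewrite big_nil. Qed.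
Lemma GS_D P Q x y : GS P Q x -> GS P Q y -> GS P Q (x + y).
Proof.
move=> [s1 [h1 ->]] [s2 [h2 ->]]; exists (s1 ++ s2); rewrite big_cat; split => //.
by move=> p; rewrite mem_cat => /orP [/h1|/h2].
Qed.
Lemma GS_sum P Q (I : Type) (r : seq I) (B : pred I) (F : I -> V) :
  (forall i, B i -> GS P Q (F i)) -> GS P Q (\sum_(i <- r | B i) F i).
Proof. by move=> h; apply: (big_ind (GS P Q)) => //; [exact: GS_0 | exact: GS_D]. Qed.
Lemma GS_1 (P : int -> Prop) (Q : V -> Prop) n x : P n -> Vn n x -> Q x -> GS P Q x.
Proof.
by move=> h1 h2 h3; exists [:: (n, x)]; rewrite big_seq1; split => // p; rewrite inE => /eqP ->.
Qed.

Lemma Vn_Z n a x : Vn n x -> Vn n (a *: x).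
Proof. by move=> h; have := (grade_subspace HV n).2 a x 0 h (grade_subspace HV n).1; rewrite addr0. Qed.
Lemma Vn_D n x y : Vn n x -> Vn n y -> Vn n (x + y).
Proof. by move=> h1 h2; have := (grade_subspace HV n).2 1 x y h1 h2; rewrite scale1r. Qed.
Lemma Vn_N n x : Vn n x -> Vn n (- x).
Proof. by move=> h; rewrite -scaleN1r; apply: Vn_Z. Qed.
Lemma Vn_sum n (I : Type) (r : seq I) (B : pred I) (F : I -> V) :
  (forall i, B i -> Vn n (F i)) -> Vn n (\sum_(i <- r | B i) F i).
Proof.
move=> h; apply: (big_ind (Vn n)) => //; [exact: (grade_subspace HV n).1 | exact: Vn_D].
Qed.

Lemma GS_Z P (Q : V -> Prop) a x : (forall y, Q y -> Q (a *: y)) -> GS P Q x -> GS P Q (a *: x).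
Proof.
move=> hQ [s [hs ->]]; exists [seq (p.1, a *: p.2) | p <- s]; split.
  by move=> q /mapP [p /hs [h1 h2 h3] ->] /=; split => //; [apply: Vn_Z | apply: hQ].
by rewrite big_map scaler_sumr.
Qed.

Lemma GS_Y (P1 P2 P3 : int -> Prop) (Q1 Q2 Q3 : V -> Prop) m x y :
  GS P1 Q1 x -> GS P2 Q2 y ->
  (forall k n a b, P1 k -> P2 n -> Vn k a -> Vn n b -> Q1 a -> Q2 b ->
     P3 (k + n - m - 1) /\ Q3 (Y a m b)) ->
  GS P3 Q3 (Y x m y).
Proof.
move=> [s1 [h1 ->]] [s2 [h2 ->]] h.
rewrite Ysuml big_seq; apply: GS_sum => p /h1 [a1 a2 a3].
rewrite Ysumr big_seq; apply: GS_sum => q /h2 [b1 b2 b3].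
have [c1 c2] := h _ _ _ _ a1 b1 a2 b2 a3 b3.
apply: GS_1 c1 _ c2; exact: (mode_deg HV).
Qed.

Lemma GS_zero (P : int -> Prop) Q x :
  (forall n, P n -> forall y, Vn n y -> y = 0) -> GS P Q x -> x = 0.
Proof.
move=> h [s [hs ->]]; rewrite big_seq big1 // => p /hs [h1 h2 _]; exact: h h1 _ h2.
Qed.

Lemma GS_C2 (P : int -> Prop) Q x :
  (forall n y, P n -> Vn n y -> Q y -> C2' y) -> GS P Q x -> C2' x.
Proof.
move=> h [s [hs ->]]; rewrite big_seq; apply: C2_sum => p /hs [h1 h2 h3]; exact: h h1 h2 h3.
Qed.

Lemma group0 (s : seq (int * V)) : (forall p, p \in s -> Vn p.1 p.2) ->
  \sum_(p <- s) p.2 = 0 -> forall n, \sum_(p <- s | p.1 == n) p.2 = 0.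
Proof.
move=> hs h0 n.
set ws := undup (map fst s).
set t := [seq (w, \sum_(p <- s | p.1 == w) p.2) | w <- ws].
have ht : forall q, q \in t -> Vn q.1 q.2.
  move=> q /mapP [w _ ->] /=; rewrite big_seq_cond; apply: Vn_sum => p /andP [/hs hp /eqP <-] //.
have hu : uniq (map fst t) by rewrite -map_comp map_id undup_uniq.
have hsum : \sum_(q <- t) q.2 = 0.
  rewrite big_map -[X in _ = X]h0 /=.
  under eq_bigr => w _ do rewrite big_mkcond.
  rewrite exchange_big /=; apply: eq_big_seq => p hp.
  rewrite -big_mkcond /=.
  under eq_bigl => w do rewrite eq_sym.
  rewrite -big_filter filter_pred1_uniq ?undup_uniq ?big_seq1 //.
  by rewrite mem_undup; apply: map_f.
have hd := grade_direct HV hu ht hsum.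
case hn: (n \in ws).
  have := hd (n, \sum_(p <- s | p.1 == n) p.2); apply.
  by apply/mapP; exists n.
rewrite big_seq_cond big1 // => p /andP [hp /eqP hpn].
by move: hn; rewrite mem_undup -hpn map_f.
Qed.


Lemma bound_list (s : seq (int * V)) : exists W : int, forall p, p \in s -> p.1 < W.
Proof.
elim: s => [|[z y] s [W hW]]; first by exists 0.
exists (if z < W then W else z + 1) => -[z' y']; rewrite inE => /orP [/eqP [-> _]|/hW /= h] /=;
  case: ifP => h'; lia.
Qed.

Lemma GS_bounded_seq (b : seq V) :
  exists W : int, forall y, y \in b -> GS (fun n => n < W) (fun _ => True) y.
Proof.
elim: b => [|y b [W hW]]; first by exists 0.
have [s [hs ey]] := grade_span HV y.
have [W' hW'] := bound_list s.
exists (if W < W' then W' else W) => z; rewrite inE => /orP [/eqP ->|/hW h].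
  exists s; split => // p hp; have [_ h2] := hs p hp; split => //.
  have := hW' p hp; case: ifP => // /negbT; rewrite -leNgt => h'; lia.
apply: GS_mono h => // n hn; case: ifP => //; lia.
Qed.

Lemma hi_C2 : C2_cofinite Y -> exists W : int, forall (n : int) x, W <= n -> Vn n x -> C2' x.
Proof.
move=> [b hb]; have [W hW] := GS_bounded_seq b; exists W => n x hn hx.
have [a ha] := hb x.
set S := \sum_(i < size b) a i *: b`_i in ha.
have hS : GS (fun n => n < W) (fun _ => True) S.
  apply: GS_sum => i _; apply: GS_Z => //; apply: hW; apply: mem_nth; exact: ltn_ord.
have hc : GS (fun _ => True) C2' (x - S).
  move: ha => [s ->]; apply: GS_sum => q _; apply: GS_Z; first exact: C2_Z.
  apply: GS_Y; [apply: GS_of; exact: grade_span HV _ | apply: GS_of; exact: grade_span HV _|].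
  by move=> *; split => //; apply: C2_m2.
move: hS hc => [s1 [h1 e1]] [s2 [h2 e2]].
pose s : seq (int * V) := (n, x) :: [seq (p.1, - p.2) | p <- s1 ++ s2].
have hVs : forall p, p \in s -> Vn p.1 p.2.
  move=> p; rewrite inE => /orP [/eqP -> //|/mapP [q]].
  rewrite mem_cat => /orP [/h1 [_ hq _]|/h2 [_ hq _]] -> /=; exact: Vn_N.
have hs0 : \sum_(p <- s) p.2 = 0.
  rewrite /s big_cons big_map big_cat /= !sumrN -e1 -e2.
  by rewrite -opprD [S + _]addrC subrK subrr.
have := group0 hVs hs0 n.
rewrite /s big_cons eqxx big_map big_cat /=.
rewrite [X in _ + (X + _) = _ -> _]big1_seq; last first.
  move=> p /andP [/eqP /= hp /h1 [hp' _ _]]; exfalso; move: hp hp' hn; case: p => z y /=; lia.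
rewrite add0r => h.
have -> : x = - \sum_(i <- s2 | i.1 == n) - i.2.
  by apply/eqP; rewrite -subr_eq0 opprK h.
by apply: C2_N; rewrite big_seq_cond; apply: C2_sum => p /andP [/h2 [_ _ hp] _]; apply: C2_N.
Qed.


Lemma iter_cons v n ns : iter_prod Y v (n :: ns) = Y v n (iter_prod Y v ns).
Proof. by []. Qed.
Lemma iter_nil v : iter_prod Y v [::] = v.
Proof. by []. Qed.
Lemma in01_le0 n : in01 n -> n <= 0.
Proof. by move=> /orP [/eqP ->|/eqP ->]. Qed.

Lemma F4aux u ns : all in01 ns -> 0 \notin ns -> C2' (Y u 0 (iter_prod Y u ns)).
Proof.
elim: ns => [|n ns IH]; first by rewrite iter_nil => _ _; apply: F3'.
rewrite iter_cons /= => /andP [hn hns]; rewrite inE negb_or => /andP [hn0 hns0].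
have -> : n = -1 by move: hn hn0; rewrite /in01 => /orP [/eqP ->|/eqP ->].
have [N HN] := COMM u u (iter_prod Y u ns) 0 (-1).
rewrite -(subrK (Y u (-1) (Y u 0 (iter_prod Y u ns))) (Y u 0 _)) HN.
apply: C2_D; last by apply: C2_closedL; [lia | exact: IH].
apply: C2_sum => -[[|i] hi] _ /=; apply: C2_Z.
  by apply: C2_closedR; [lia | exact: F3'].
apply: F0'; lia.
Qed.

Lemma F4 u ns : all in01 ns -> 0 \in ns -> C2' (iter_prod Y u ns).
Proof.
elim: ns => [|n ns IH] //; rewrite iter_cons /= => /andP [hn hns].
rewrite inE => /orP [/eqP <-|h0].
  case h0: (0 \in ns); first by apply: C2_closedL => //; exact: IH.
  by apply: F4aux => //; rewrite h0.
by apply: C2_closedL; [exact: in01_le0 | exact: IH].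
Qed.

Lemma pure u : GS (fun n => 1 <= n) (fun _ => True) u -> forall ns, all in01 ns -> 0 \notin ns ->
  GS (fun n => 1 + (size ns)%:Z <= n) (fun _ => True) (iter_prod Y u ns).
Proof.
move=> hu; elim => [|n ns IH]; first by move=> _ _; apply: GS_mono hu => // n /=; lia.
rewrite iter_cons /= => /andP [hn hns]; rewrite inE negb_or => /andP [hn0 hns0].
have -> : n = -1 by move: hn hn0; rewrite /in01 => /orP [/eqP ->|/eqP ->].
apply: GS_Y hu (IH hns hns0) _ => k n' a b hk hn' _ _ _ _; split => //; lia.
Qed.

End Work.

Theorem mainTheorem10 (R : realType) (V : lmodType R[i])
    (Vn : int -> V -> Prop) (Y : V -> int -> V -> V) (vac om : V) (c : R[i])
    (HV : VOA_axioms Vn Y vac om c) (M : V -> Prop) (HM : is_subspace M) :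
  (* (1) *)
  (forall n0 : int, n0 < 0 -> (exists x, Vn n0 x /\ x <> 0) ->
     (forall n, n < n0 -> forall x, Vn n x -> x = 0) ->
     (forall v, in_graded_sum Vn (fun n => (n0 <= n) && (n <= -1)) v -> sr01 Y M v)
     /\ (exists v, v <> 0 /\ sr01 Y M v))
  /\
  (* (2) *)
  (C2_cofinite Y -> (forall x, C2 Y x -> M x) ->
     forall (k : nat) (u : V), (0 < k)%N ->
       in_graded_sum Vn (fun n => (1 <= n) && (n <= k%:Z)) u -> sr01 Y M u).
Proof.
split.
  move=> n0 hn0 [x [hx hx0]] hbelow.
  have key : forall v, in_graded_sum Vn (fun n => (n0 <= n) && (n <= -1)) v ->
      forall ns, all in01 ns -> (absz n0 <= size ns)%N -> iter_prod Y v ns = 0.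
    move=> v hv ns hns hsz.
    have g : forall ns, all in01 ns ->
        GS Vn (fun n => n <= -1 - (size ns)%:Z) (fun _ => True) (iter_prod Y v ns).
      elim => [|m ms IH].
        by move=> _; apply: GS_mono (GS_of hv) => // n /andP [_ h] /=; lia.
      rewrite iter_cons /= => /andP [hm hms].
      have hv' : GS Vn (fun n => n <= -1) (fun _ => True) v.
        by apply: GS_mono (GS_of hv) => // n /andP [_ h].
      apply: (GS_Y HV hv' (IH hms)).
      move=> k n a b hk hn _ _ _ _; split => //.
      by move: hm; rewrite /in01 => /orP [/eqP ->|/eqP ->]; lia.
    apply: GS_zero (g ns hns) => n hn y hy; apply: hbelow _ _ hy; lia.
  have sr : forall v, in_graded_sum Vn (fun n => (n0 <= n) && (n <= -1)) v -> sr01 Y M v.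
    move=> v hv; split.
      move=> b; exists (absz n0) => s ns hsz hs hns.
      by rewrite (key v hv ns hns hsz) (Y0r HV); exact: HM.1.
    move=> w; exists (absz n0) => n ns hsz hn hns.
    by rewrite (key v hv ns hns hsz) (Y0l HV); exact: HM.1.
  split; first exact: sr.
  exists x; split => //; apply: sr; exists [:: (n0, x)]; split; last by rewrite big_seq1.
  by move=> p; rewrite inE => /eqP -> /=; split => //; apply/andP; split; lia.
move=> hcof hC2 k u hk hu.
have [W hW] := hi_C2 HV hcof.
have hC : forall ns, all in01 ns -> (absz W <= size ns)%N -> C2' Y (iter_prod Y u ns).
  move=> ns hns hsz; case h0: (0 \in ns); first by apply: (F4 HV) => //; rewrite h0.
  have hu1 : GS Vn (fun n => 1 <= n) (fun _ => True) u.
    by apply: GS_mono (GS_of hu) => // n /andP [h _].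
  apply: GS_C2 (pure HV hu1 hns (negbT h0)) => n y hn hy _; apply: hW hy; lia.
split.
  move=> b; exists (absz W) => s ns hsz hs hns; apply: hC2.
  exact: C2_closedL HV _ _ _ (in01_le0 hs) (hC ns hns hsz).
move=> w; exists (absz W) => n ns hsz hn hns; apply: hC2.
exact: C2_closedR HV _ _ _ (in01_le0 hn) (hC ns hns hsz).
Qed.
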